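(* Let $K=1$, with channel coefficient $\tilde h_1\in\mathbb C\setminus\{0\}$, noise parameters $\sigma_1^2,\sigma_2^2>0$ and splitting ratio $\rho\in(0,1)$. For $P>0$ consider the splitting channel $\tilde Y_1=\sqrt{\rho|\tilde h_1|^2}\sqrt P\tilde X+\tilde Z$, $Y_2=(1-\rho)|\tilde h_1|^2P|\tilde X|^2+N$, with $\tilde X\sim\mathcal{CN}(0,1)$, $\tilde Z\sim\mathcal{CN}(0,\sigma_1^2)$, $N\sim\mathcal N(0,\sigma_2^2)$ mutually independent. In the high-SNR regime ($P\to\infty$), the splitting ratio maximizing the mutual information $\mathcal I(\sqrt P\tilde X;\tilde Y_1,Y_2)$ is $\rho^\star=1/3$, and the corresponding maximal mutual information satisfies $$\mathcal I(\sqrt P\tilde X;\tilde Y_1,Y_2)\big|_{\rho^\star}\approx\log_2\!\Big(\frac{2\sqrt2}{3\sqrt3}\,\frac{|\tilde h_1|^3P^{3/2}}{\sigma_1\sigma_2}\Big)-\frac{\gamma}{2\ln2},$$ where $\approx$ means that the difference between the two sides tends to $0$ as $P\to\infty$.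
   Context: $\mathcal I$ denotes mutual information in bits; $\gamma$ is Euler's constant; $\mathcal{CN}(0,\sigma^2)$ is the circularly symmetric complex Gaussian distribution with variance $\sigma^2$; $\sigma_1,\sigma_2$ are the positive square roots of $\sigma_1^2,\sigma_2^2$. In the high-SNR regime the mutual information equals, up to a vanishing term, $\log_2(\sqrt2P^{3/2}\sqrt{\Theta_1\Theta_2}/(\sigma_1\sigma_2))-\gamma/(2\ln2)$ with $\Theta_1=\rho|\tilde h_1|^2$, $\Theta_2=(1-\rho)^2|\tilde h_1|^4$; ''optimal in the high SNR regime'' refers to maximizing this asymptotic expression over $\rho$. *)

(* Defs.v *)
From Stdlib Require Import Reals.
From Coquelicot Require Import Coquelicot.
Open Scope R_scope.

Definition log2 (x : R) : R := ln x / ln 2.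

Definition euler_gamma : R :=
  real (Lim_seq (fun n : nat => sum_n_m (fun k : nat => / INR k) 1 n - ln (INR n))).

Definition Theta1 (h : C) (rho : R) : R := rho * (Cmod h) ^ 2.
Definition Theta2 (h : C) (rho : R) : R := (1 - rho) ^ 2 * (Cmod h) ^ 4.

(* High-SNR asymptotic expression of I(sqrt P X; Y1, Y2), with s1 = sigma_1^2,
   s2 = sigma_2^2 (variances); sigma_i = sqrt s_i. *)
Definition MI_asym (h : C) (s1 s2 P rho : R) : R :=
  log2 (sqrt 2 * Rpower P (3/2) * sqrt (Theta1 h rho * Theta2 h rho)
        / (sqrt s1 * sqrt s2))
  - euler_gamma / (2 * ln 2).

Definition MI_opt_rhs (h : C) (s1 s2 P : R) : R :=
  log2 ((2 * sqrt 2) / (3 * sqrt 3) * (Cmod h) ^ 3 * Rpower P (3/2)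
        / (sqrt s1 * sqrt s2))
  - euler_gamma / (2 * ln 2).

(* Main.v *)
Require Import Defs.
From Stdlib Require Import Reals Lra Psatz.
From Coquelicot Require Import Coquelicot.
Open Scope R_scope.

Lemma key_eq (c : R) : 0 < c ->
  sqrt 2 * sqrt ((1/3) * c ^ 2 * ((1 - 1/3) ^ 2 * c ^ 4)) =
  (2 * sqrt 2) / (3 * sqrt 3) * c ^ 3.
Proof.
  intros Hc.
  assert (H3 : 0 < sqrt 3) by (apply sqrt_lt_R0; lra).
  assert (Hs3 : sqrt 3 * sqrt 3 = 3) by (apply sqrt_sqrt; lra).
  replace ((1/3) * c ^ 2 * ((1 - 1/3) ^ 2 * c ^ 4)) with ((2 / (3 * sqrt 3) * c ^ 3) ^ 2).
  - rewrite sqrt_pow2. field. lra.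
    apply Rmult_le_pos. apply Rlt_le, Rdiv_lt_0_compat; nra. apply pow_le; lra.
  - field_simplify; [|lra]. replace (sqrt 3 ^ 2) with 3 by (simpl; lra). field.
Qed.

Theorem proposition1 (h : C) (s1 s2 : R) (MI : R -> R -> R)
  (Hh : h <> 0%C) (Hs1 : 0 < s1) (Hs2 : 0 < s2)
  (HMI : forall rho, 0 < rho < 1 ->
     is_lim (fun P => MI P rho - MI_asym h s1 s2 P rho) p_infty 0) :
  (forall P, 0 < P -> forall rho, 0 < rho < 1 -> rho <> 1/3 ->
     MI_asym h s1 s2 P rho < MI_asym h s1 s2 P (1/3))
  /\ is_lim (fun P => MI P (1/3) - MI_opt_rhs h s1 s2 P) p_infty 0.
Proof.
  assert (Hc : 0 < Cmod h) by (apply Cmod_gt_0; exact Hh).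
  set (c := Cmod h) in *.
  assert (Hl2 : 0 < ln 2) by (rewrite <- ln_1; apply ln_increasing; lra).
  assert (Hrho : forall rho, 0 < rho < 1 -> rho <> 1/3 ->
     rho * (1 - rho) ^ 2 < 1/3 * (1 - 1/3) ^ 2).
  { intros rho Hr Hn.
    assert (0 < (rho - 1/3) ^ 2).
    { assert (rho - 1/3 <> 0) by lra. simpl. rewrite Rmult_1_r. apply Rsqr_pos_lt in H. unfold Rsqr in H. exact H. }
    nra. }
  split.
  - intros P HP rho Hr Hn. unfold MI_asym, log2, Theta1, Theta2. fold c.
    apply Rplus_lt_compat_r. unfold Rdiv at 1 3. apply Rmult_lt_compat_r.
    { apply Rinv_0_lt_compat; exact Hl2. }
    assert (Hs : 0 < sqrt s1 * sqrt s2) by (apply Rmult_lt_0_compat; apply sqrt_lt_R0; lra).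
    assert (HR : 0 < Rpower P (3/2)) by (unfold Rpower; apply exp_pos).
    assert (H2 : 0 < sqrt 2) by (apply sqrt_lt_R0; lra).
    apply ln_increasing.
    + apply Rdiv_lt_0_compat; [|exact Hs]. apply Rmult_lt_0_compat; [nra|].
      apply sqrt_lt_R0. apply Rmult_lt_0_compat. apply Rmult_lt_0_compat; [lra| apply pow_lt; lra].
      apply Rmult_lt_0_compat. apply pow_lt; lra. apply pow_lt; lra.
    + unfold Rdiv. apply Rmult_lt_compat_r. apply Rinv_0_lt_compat; exact Hs.
      apply Rmult_lt_compat_l. nra.
      apply sqrt_lt_1_alt. split.
      * apply Rmult_le_pos. apply Rmult_le_pos; [lra| apply pow_le; lra]. apply Rmult_le_pos. apply pow_le; lra. apply pow_le; lra.
      * assert (0 < c ^ 6) by (apply pow_lt; lra).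
        specialize (Hrho rho Hr Hn).
        replace (rho * c ^ 2 * ((1 - rho) ^ 2 * c ^ 4)) with ((rho * (1 - rho) ^ 2) * c ^ 6) by ring.
        replace (1/3 * c ^ 2 * ((1 - 1/3) ^ 2 * c ^ 4)) with ((1/3 * (1 - 1/3) ^ 2) * c ^ 6) by ring.
        nra.
  - apply is_lim_ext with (f := fun P => MI P (1/3) - MI_asym h s1 s2 P (1/3)).
    + intros P. unfold MI_asym, MI_opt_rhs, Theta1, Theta2. fold c.
      replace (sqrt 2 * Rpower P (3 / 2) * sqrt (1 / 3 * c ^ 2 * ((1 - 1 / 3) ^ 2 * c ^ 4)))
        with (2 * sqrt 2 / (3 * sqrt 3) * c ^ 3 * Rpower P (3 / 2)).
      reflexivity.
      rewrite <- (key_eq c Hc). ring.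
    + apply HMI. lra.
Qed.
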